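(* Let $B\colon\mathbf{Set}\to\mathbf{Set}$ be a functor, $\Lambda$ a set and $(\tau_\lambda\colon B\mathbb{R}\to\mathbb{R})_{\lambda\in\Lambda}$ functions such that, for every set $Y$: (1) if $k\colon Y\to\mathbb{R}$ is bounded then $\tau_\lambda\circ Bk$ is bounded; (2) if $k_i\colon Y\to\mathbb{R}$ converges uniformly to $h$ then $\tau_\lambda\circ Bk_i$ converges uniformly to $\tau_\lambda\circ Bh$, for each $\lambda$. Then for every coalgebra $x\colon X\to BX$, the bisimulation uniformity of $x$ coincides with the logical uniformity of $x$, i.e. it is the coarsest uniformity on $X$ making every $[\![\varphi]\!]_x\colon X\to\mathbb{R}$ uniformly continuous.
   Context: For a family $F$ of functions $Y\to\mathbb{R}$, $\mathscr{U}(F)$ is the coarsest uniformity on $Y$ making each $f\in F$ uniformly continuous into $(\mathbb{R},\mathscr{U}_e)$, $\mathscr{U}_e$ the Euclidean uniformity. Formulas: $\varphi::=1\mid\min(\varphi_1,\varphi_2)\mid r+\varphi\mid r\times\varphi\ (r\in\mathbb{R})\mid\heartsuit_\lambda\varphi$; semantics $[\![1]\!]=1$, $\min$ pointwise, $[\![r+\varphi]\!]=r+[\![\varphi]\!]$, $[\![r\times\varphi]\!]=r[\![\varphi]\!]$, $[\![\heartsuit_\lambda\varphi]\!]_x=\tau_\lambda\circ B[\![\varphi]\!]_x\circ x$. Logical uniformity: $\mathscr{U}(\{[\![\varphi]\!]_x\})$. For a uniformity $\mathscr{U}$ on $X$, $\Phi(\mathscr{U})=\mathscr{U}(\{\tau_\lambda\circ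 Bh\circ x\mid\lambda,\ h\colon(X,\mathscr{U})\to(\mathbb{R},\mathscr{U}_e)$ uniformly continuous$\})$; uniformities are ordered by $\mathscr{U}\sqsubseteq\mathscr{V}$ iff $\mathscr{U}\supseteq\mathscr{V}$, and the bisimulation uniformity is the $\sqsubseteq$-greatest fixed point of $\Phi$. *)

(* Defs.v *)
From Stdlib Require Import Reals.
Open Scope R_scope.

Definition is_uniformity {X : Type} (U : (X * X -> Prop) -> Prop) : Prop :=
  U (fun _ => True) /\
  (forall E F : X * X -> Prop, U E -> (forall p, E p -> F p) -> U F) /\
  (forall E F : X * X -> Prop, U E -> U F -> U (fun p => E p /\ F p)) /\
  (forall E, U E -> forall a : X, E (a, a)) /\
  (forall E, U E -> U (fun p => E (snd p, fst p))) /\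
  (forall E, U E -> exists F, U F /\
      forall a b c : X, F (a, b) -> F (b, c) -> E (a, c)).

Definition euclid_unif (E : R * R -> Prop) : Prop :=
  exists e, 0 < e /\ forall a b : R, Rabs (a - b) < e -> E (a, b).

Definition unif_cont {X : Type} (U : (X * X -> Prop) -> Prop) (f : X -> R) : Prop :=
  forall E, euclid_unif E -> U (fun p => E (f (fst p), f (snd p))).

(** U(F): the coarsest uniformity on X making each f in F uniformly continuous,
    i.e. the intersection of all uniformities making every f in F uniformly
    continuous (the initial uniformity). *)
Definition unif_gen {X : Type} (F : (X -> R) -> Prop) (E : X * X -> Prop) : Prop :=
  forall U, is_uniformity U -> (forall f, F f -> unif_cont U f) -> U E.

(** Extensional equality of uniformities and the order U ⊑ V iff U ⊇ V. *)
Definition unif_eq {X : Type} (U V : (X * X -> Prop) -> Prop) : Prop :=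
  forall E, U E <-> V E.
Definition unif_sqle {X : Type} (U V : (X * X -> Prop) -> Prop) : Prop :=
  forall E, V E -> U E.

Inductive formula (Lam : Type) : Type :=
| FOne : formula Lam
| FMin : formula Lam -> formula Lam -> formula Lam
| FAdd : R -> formula Lam -> formula Lam
| FMul : R -> formula Lam -> formula Lam
| FHeart : Lam -> formula Lam -> formula Lam.
Arguments FOne {Lam}.
Arguments FMin {Lam} _ _.
Arguments FAdd {Lam} _ _.
Arguments FMul {Lam} _ _.
Arguments FHeart {Lam} _ _.

Section Semantics.
Variables (B : Type -> Type) (fmap : forall X Y : Type, (X -> Y) -> B X -> B Y).
Variables (Lam : Type) (tau : Lam -> B R -> R).
Variables (X : Type) (x : X -> B X).

Fixpoint sem (phi : formula Lam) : X -> R :=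
  match phi with
  | FOne => fun _ => 1
  | FMin p q => fun s => Rmin (sem p s) (sem q s)
  | FAdd r p => fun s => r + sem p s
  | FMul r p => fun s => r * sem p s
  | FHeart l p => fun s => tau l (fmap X R (sem p) (x s))
  end.

Definition logical_unif : (X * X -> Prop) -> Prop :=
  unif_gen (fun f => exists phi, f = sem phi).

Definition Phi (U : (X * X -> Prop) -> Prop) : (X * X -> Prop) -> Prop :=
  unif_gen (fun f => exists (l : Lam) (h : X -> R),
                unif_cont U h /\ f = (fun s => tau l (fmap X R h (x s)))).

Definition is_bisim_unif (U : (X * X -> Prop) -> Prop) : Prop :=
  is_uniformity U /\ unif_eq (Phi U) U /\
  (forall V, is_uniformity V -> unif_eq (Phi V) V -> unif_sqle V U).
End Semantics.

Definition bounded_fun {Y : Type} (k : Y -> R) : Prop :=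
  exists M, forall y, Rabs (k y) <= M.

Definition unif_conv {Y : Type} (k : nat -> Y -> R) (h : Y -> R) : Prop :=
  forall e, 0 < e -> exists N, forall n, (N <= n)%nat -> forall y, Rabs (k n y - h y) < e.

(* Main.v *)
Require Import Defs.
From Stdlib Require Import Reals Lra List.
From Stdlib Require Import FunctionalExtensionality PropExtensionality IndefiniteDescription Classical.
Open Scope R_scope.
Import ListNotations.

Ltac rcase := repeat match goal with
 | |- context [Rcase_abs ?x] => destruct (Rcase_abs x)
 | H : context [Rcase_abs ?x] |- _ => destruct (Rcase_abs x)
 | |- context [Rle_dec ?x ?y] => destruct (Rle_dec x y)
 | H : context [Rle_dec ?x ?y] |- _ => destruct (Rle_dec x y)
 end.
Ltac rsolve := unfold Rabs, Rmin, Rmax in *; rcase; lra.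

Definition Wgen {X : Type} (F : (X -> R) -> Prop) (E : X * X -> Prop) : Prop :=
  exists (fs : list (X -> R)) (d : R), 0 < d /\ (forall f, In f fs -> F f) /\
    forall a b, (forall f, In f fs -> Rabs (f a - f b) < d) -> E (a, b).

Lemma W_unif {X : Type} (F : (X -> R) -> Prop) : is_uniformity (Wgen F).
Proof.
  split; [|split; [|split; [|split; [|split]]]].
  - exists nil, 1. repeat split; [lra| intros f []].
  - intros E G [fs [d [Hd [HF HE]]]] HEG. exists fs, d. repeat split; auto.
  - intros E G [fs [d [Hd [HF HE]]]] [gs [d' [Hd' [HG HG']]]].
    exists (fs ++ gs), (Rmin d d'). split; [apply Rmin_glb_lt; auto|]. split.
    + intros f Hf. apply in_app_or in Hf as [Hf|Hf]; auto.
    + intros a b Hab. split.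
      * apply HE. intros f Hf. eapply Rlt_le_trans; [apply Hab; apply in_or_app; auto| apply Rmin_l].
      * apply HG'. intros f Hf. eapply Rlt_le_trans; [apply Hab; apply in_or_app; auto| apply Rmin_r].
  - intros E [fs [d [Hd [HF HE]]]] a. apply HE. intros f _.
    unfold Rminus. rewrite Rplus_opp_r, Rabs_R0. exact Hd.
  - intros E [fs [d [Hd [HF HE]]]]. exists fs, d. repeat split; auto.
    intros a b Hab. simpl. apply HE. intros f Hf. rewrite Rabs_minus_sym. auto.
  - intros E [fs [d [Hd [HF HE]]]].
    exists (fun p => forall f, In f fs -> Rabs (f (fst p) - f (snd p)) < d / 2).
    split.
    + exists fs, (d/2). repeat split; auto; lra.
    + intros a b c Hab Hbc. apply HE. intros f Hf.
      specialize (Hab f Hf). specialize (Hbc f Hf). simpl in *.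
      clear HE HF. rsolve.
Qed.

Lemma W_cont {X : Type} (F : (X -> R) -> Prop) f : F f -> unif_cont (Wgen F) f.
Proof.
  intros Hf E [e [He HE]]. exists [f], e. split; auto. split.
  - intros g [<-|[]]; auto.
  - intros a b H. simpl. apply HE. apply H. left; auto.
Qed.

Lemma W_le {X : Type} (F : (X -> R) -> Prop) U :
  is_uniformity U -> (forall f, F f -> unif_cont U f) -> forall E, Wgen F E -> U E.
Proof.
  intros [Htop [Hsup [Hint _]]] Hc E [fs [d [Hd [HF HE]]]].
  apply Hsup with (fun p => forall f, In f fs -> Rabs (f (fst p) - f (snd p)) < d).
  2: { intros [a b] H. apply HE. exact H. }
  clear HE. induction fs as [|g gs IH].
  - apply Hsup with (fun _ => True); auto. intros p _ f [].
  - apply Hsup with (fun p => Rabs (g (fst p) - g (snd p)) < d /\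
        forall f, In f gs -> Rabs (f (fst p) - f (snd p)) < d).
    + apply Hint.
      * apply (Hc g (HF g (or_introl eq_refl)) (fun q => Rabs (fst q - snd q) < d)).
        exists d. split; auto.
      * apply IH. intros f Hf. apply HF. right. auto.
    + intros p [H1 H2] f [<-|Hf]; auto.
Qed.

Lemma gen_eq {X : Type} (F : (X -> R) -> Prop) : unif_gen F = Wgen F.
Proof.
  extensionality E; apply propositional_extensionality; split.
  - intros H. apply H. apply W_unif. intros f Hf; apply W_cont; auto.
  - intros H U HU Hc. eapply W_le; eauto.
Qed.

Lemma uc_ball {X : Type} U (f : X -> R) e : unif_cont U f -> 0 < e ->
  U (fun p => Rabs (f (fst p) - f (snd p)) < e).
Proof.
  intros H He. apply (H (fun q => Rabs (fst q - snd q) < e)). exists e; split; auto.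
Qed.

Lemma uc_intro {X : Type} U (f : X -> R) : is_uniformity U ->
  (forall e, 0 < e -> U (fun p => Rabs (f (fst p) - f (snd p)) < e)) -> unif_cont U f.
Proof.
  intros [_ [Hsup _]] H E [e [He HE]].
  apply Hsup with (fun p => Rabs (f (fst p) - f (snd p)) < e); auto.
Qed.

Lemma uc_const {X : Type} U (c : R) : is_uniformity U -> unif_cont U (fun _ : X => c).
Proof.
  intros HU. apply uc_intro; auto. intros e He. destruct HU as [Htop [Hsup _]].
  apply Hsup with (fun _ => True); auto. intros. rsolve.
Qed.

Lemma uc_add {X : Type} U (r : R) (f : X -> R) : is_uniformity U -> unif_cont U f ->
  unif_cont U (fun s => r + f s).
Proof.
  intros HU Hf. apply uc_intro; auto. intros e He. destruct HU as [Htop [Hsup _]].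
  eapply Hsup. apply (uc_ball U f e Hf He). intros p H. simpl in *.
  replace (r + f (fst p) - (r + f (snd p))) with (f (fst p) - f (snd p)) by ring. auto.
Qed.

Lemma uc_mul {X : Type} U (r : R) (f : X -> R) : is_uniformity U -> unif_cont U f ->
  unif_cont U (fun s => r * f s).
Proof.
  intros HU Hf. apply uc_intro; auto. intros e He. destruct HU as [Htop [Hsup _]].
  assert (Hr : 0 <= Rabs r) by apply Rabs_pos.
  eapply Hsup. apply (uc_ball U f (e / (Rabs r + 1)) Hf).
  { apply Rdiv_lt_0_compat; lra. }
  intros p H. simpl in *.
  replace (r * f (fst p) - r * f (snd p)) with (r * (f (fst p) - f (snd p))) by ring.
  rewrite Rabs_mult. set (t := Rabs (f (fst p) - f (snd p))) in *.
  assert (Ht : 0 <= t) by apply Rabs_pos.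
  assert (t * (Rabs r + 1) < e).
  { replace e with ((e / (Rabs r + 1)) * (Rabs r + 1)) by (field; lra).
    apply Rmult_lt_compat_r; lra. }
  nra.
Qed.

Lemma uc_min {X : Type} U (f g : X -> R) : is_uniformity U -> unif_cont U f -> unif_cont U g ->
  unif_cont U (fun s => Rmin (f s) (g s)).
Proof.
  intros HU Hf Hg. apply uc_intro; auto. intros e He. destruct HU as [Htop [Hsup [Hint _]]].
  eapply Hsup. apply Hint; [apply (uc_ball U f e Hf He) | apply (uc_ball U g e Hg He)].
  intros p [H1 H2]. simpl in *. revert H1 H2.
  generalize (f (fst p)) (f (snd p)) (g (fst p)) (g (snd p)). intros. rsolve.
Qed.

Lemma uc_limit {X : Type} U (gs : nat -> X -> R) g : is_uniformity U ->
  (forall n, unif_cont U (gs n)) -> unif_conv gs g -> unif_cont U g.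
Proof.
  intros HU Hgs Hc. apply uc_intro; auto. intros e He.
  destruct (Hc (e/3)) as [N HN]; [lra|].
  destruct HU as [Htop [Hsup _]].
  eapply Hsup. apply (uc_ball U (gs N) (e/3)); auto; lra.
  intros [a b] H. simpl in *. pose proof (HN N (le_n N) a). pose proof (HN N (le_n N) b).
  revert H H0 H1. generalize (gs N a) (gs N b) (g a) (g b). intros. rsolve.
Qed.

Definition dist {X : Type} (fs : list (X -> R)) (a b : X) : R :=
  fold_right (fun f acc => Rmax (Rabs (f a - f b)) acc) 0 fs.

Lemma dist_nonneg {X : Type} (fs : list (X -> R)) a b : 0 <= dist fs a b.
Proof. induction fs; simpl; [lra|]. eapply Rle_trans; [exact IHfs| apply Rmax_r]. Qed.

Lemma dist_lt {X : Type} (fs : list (X -> R)) a b η :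
  dist fs a b < η -> forall f, In f fs -> Rabs (f a - f b) < η.
Proof.
  induction fs as [|g gs IH]; simpl; intros H f Hf; [destruct Hf|].
  destruct Hf as [<-|Hf].
  - eapply Rle_lt_trans; [apply Rmax_l| exact H].
  - apply IH; auto. eapply Rle_lt_trans; [apply Rmax_r| exact H].
Qed.

Lemma lt_dist {X : Type} (fs : list (X -> R)) a b η : 0 < η ->
  (forall f, In f fs -> Rabs (f a - f b) < η) -> dist fs a b < η.
Proof.
  induction fs as [|g gs IH]; simpl; intros Hη H; auto.
  apply Rmax_lub_lt; auto.
Qed.

Lemma net_gen {X : Type} (fs : list (X -> R)) : (forall f, In f fs -> bounded_fun f) ->
  forall η, 0 < η -> forall S : X -> Prop, exists bs, (forall b, In b bs -> S b) /\
    forall a, S a -> exists b, In b bs /\ forall f, In f fs -> Rabs (f a - f b) < η.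
Proof.
  intros Hb η Hη. induction fs as [|f fs IH]; intros S.
  - destruct (classic (exists a, S a)) as [[a0 Ha0]|Hn].
    + exists [a0]. split. intros b [<-|[]]; auto. intros a _. exists a0.
      split; [left; auto| intros f []].
    + exists []. split. intros b []. intros a Ha. exfalso; eauto.
  - assert (IH' := IH (fun g Hg => Hb g (or_intror Hg))). clear IH.
    destruct (Hb f (or_introl eq_refl)) as [M HM].
    assert (Hstrip: forall N c (S : X -> Prop), (forall a, S a -> c <= f a < c + INR N * η) ->
       exists bs, (forall b, In b bs -> S b) /\ forall a, S a -> exists b, In b bs /\
          forall g, In g (f::fs) -> Rabs (g a - g b) < η).
    { induction N as [|N IHN]; intros c S' HS'.
      - exists []. split. intros b []. intros a Ha. specialize (HS' a Ha). simpl in HS'. lra.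
      - destruct (IH' (fun a => S' a /\ f a < c + η)) as [bs1 [Hin1 Hc1]].
        destruct (IHN (c + η) (fun a => S' a /\ c + η <= f a)) as [bs2 [Hin2 Hc2]].
        { intros a [Ha Hle]. specialize (HS' a Ha).
          rewrite S_INR, Rmult_plus_distr_r, Rmult_1_l in HS'. split; lra. }
        exists (bs1 ++ bs2). split.
        + intros b Hb'. apply in_app_or in Hb' as [Hb'|Hb'];
            [apply (Hin1 b Hb') | apply (Hin2 b Hb')].
        + intros a Ha. destruct (Rlt_le_dec (f a) (c + η)) as [Hlt|Hge].
          * destruct (Hc1 a (conj Ha Hlt)) as [b [Hbin Hbc]]. exists b.
            split. apply in_or_app; left; auto.
            intros g [<-|Hg]; auto.
            destruct (Hin1 b Hbin) as [HbS Hbf].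
            pose proof (HS' a Ha). pose proof (HS' b HbS).
            apply Rabs_def1; lra.
          * destruct (Hc2 a (conj Ha Hge)) as [b [Hbin Hbc]]. exists b.
            split; [apply in_or_app; right; auto | auto]. }
    destruct (INR_archimed η (2 * M) Hη) as [N HN].
    apply (Hstrip N (- M) S). intros a _. specialize (HM a).
    unfold Rabs in HM; destruct (Rcase_abs (f a)); split; lra.
Qed.

Lemma net {X : Type} (fs : list (X -> R)) : (forall f, In f fs -> bounded_fun f) ->
  forall η, 0 < η -> exists bs : list X, forall a, exists b, In b bs /\ dist fs a b < η.
Proof.
  intros Hb η Hη. destruct (net_gen fs Hb η Hη (fun _ => True)) as [bs [_ H]].
  exists bs. intros a. destruct (H a I) as [b [Hb1 Hb2]]. exists b. split; auto.
  apply lt_dist; auto.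
Qed.

Lemma fold_min_le {X : Type} (T : X -> R) c bs b : In b bs ->
  fold_right (fun b acc => Rmin (T b) acc) c bs <= T b.
Proof.
  induction bs as [|b' bs IH]; simpl; intros H; [destruct H|].
  destruct H as [<-|H]; [apply Rmin_l|]. eapply Rle_trans; [apply Rmin_r| auto].
Qed.

Lemma fold_min_ge {X : Type} (T : X -> R) c bs y : (forall b, In b bs -> y <= T b) -> y <= c ->
  y <= fold_right (fun b acc => Rmin (T b) acc) c bs.
Proof.
  induction bs as [|b' bs IH]; simpl; intros H Hc; auto.
  apply Rmin_glb; auto.
Qed.

Lemma fold_max_ge {X : Type} (T : X -> R) bs b : In b bs ->
  T b <= fold_right (fun b acc => Rmax (T b) acc) 0 bs.
Proof.
  induction bs as [|b' bs IH]; simpl; intros H; [destruct H|].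
  destruct H as [<-|H]; [apply Rmax_l|]. eapply Rle_trans; [auto| apply Rmax_r].
Qed.

Lemma fold_max_nonneg {X : Type} (T : X -> R) bs :
  0 <= fold_right (fun b acc => Rmax (T b) acc) 0 bs.
Proof.
  induction bs as [|b' bs IH]; simpl; [lra|]. eapply Rle_trans; [exact IH| apply Rmax_r].
Qed.

Lemma approx {X : Type} (Fs InF : (X -> R) -> Prop) :
  (forall f, Fs f -> bounded_fun f) -> (forall f, Fs f -> InF f) ->
  (forall c, InF (fun _ => c)) ->
  (forall f g, InF f -> InF g -> InF (fun s => Rmin (f s) (g s))) ->
  (forall r f, InF f -> InF (fun s => r + f s)) ->
  (forall r f, InF f -> InF (fun s => r * f s)) ->
  (forall f g, InF f -> (forall s, f s = g s) -> InF g) ->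
  forall h, unif_cont (Wgen Fs) h -> forall e, 0 < e ->
  exists g, InF g /\ forall s, Rabs (g s - h s) < e.
Proof.
  intros Hbd HFI Hc Hmin Hadd Hmul Hext h Hh e He.
  assert (Hmax : forall f g, InF f -> InF g -> InF (fun s => Rmax (f s) (g s))).
  { intros f g Hf Hg. eapply Hext.
    apply (Hmul (-1) (fun s => Rmin (-1 * f s) (-1 * g s))).
    apply Hmin; apply Hmul; auto.
    intros s. simpl. rsolve. }
  assert (Habs : forall f c, InF f -> InF (fun s => Rabs (f s - c))).
  { intros f c Hf. eapply Hext.
    apply (Hmax (fun s => -c + f s) (fun s => c + -1 * f s)).
    apply Hadd; auto. apply Hadd, Hmul; auto.
    intros s. simpl. rsolve. }
  set (ε := e / 4).
  assert (Hε : 0 < ε) by (unfold ε; lra).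
  destruct (uc_ball (Wgen Fs) h ε Hh Hε) as [fs [d [Hd [HF Hfs]]]]. simpl in Hfs.
  assert (Hbfs : forall f, In f fs -> bounded_fun f) by auto.
  assert (Hdist : forall b, InF (fun a => dist fs a b)).
  { intros b. clear Hfs Hbfs. induction fs as [|f fs IH]; simpl.
    - apply Hc.
    - apply (Hmax (fun a => Rabs (f a - f b)) (fun a => dist fs a b)).
      + apply Habs, HFI, HF; left; auto.
      + apply IH. intros g Hg; apply HF; right; auto. }
  assert (Hlip0 : forall a b, dist fs a b < d -> Rabs (h a - h b) < ε).
  { intros a b H. apply Hfs. apply dist_lt; auto. }
  destruct (net fs Hbfs d Hd) as [bs1 Hbs1].
  set (M := fold_right (fun b acc => Rmax (Rabs (h b)) acc) 0 bs1 + ε).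
  assert (HM0 : 0 < M).
  { unfold M. pose proof (fold_max_nonneg (fun b => Rabs (h b)) bs1). simpl in H. lra. }
  assert (HM : forall a, Rabs (h a) <= M).
  { intros a. destruct (Hbs1 a) as [b [Hb Hab]].
    pose proof (fold_max_ge (fun b => Rabs (h b)) bs1 b Hb). simpl in H.
    pose proof (Hlip0 a b Hab). unfold M.
    revert H H0. generalize (fold_right (fun b0 acc => Rmax (Rabs (h b0)) acc) 0 bs1).
    generalize (h a) (h b). intros. rsolve. }
  set (K := 2 * M / d + 1).
  assert (HK : 0 < K).
  { unfold K. assert (0 < 2 * M / d) by (apply Rdiv_lt_0_compat; lra). lra. }
  assert (Hlip : forall a b, Rabs (h a - h b) <= ε + K * dist fs a b).
  { intros a b. pose proof (dist_nonneg fs a b).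
    destruct (Rlt_le_dec (dist fs a b) d) as [Hl|Hl].
    - pose proof (Hlip0 a b Hl). assert (0 <= K * dist fs a b) by (apply Rmult_le_pos; lra).
      lra.
    - assert (K * d <= K * dist fs a b) by (apply Rmult_le_compat_l; lra).
      assert (K * d = 2 * M + d) by (unfold K; field; lra).
      pose proof (HM a) as Ha1. pose proof (HM b) as Hb1.
      assert (Rabs (h a - h b) <= 2 * M).
      { revert Ha1 Hb1. generalize (h a) (h b). intros. rsolve. }
      lra. }
  destruct (net fs Hbfs (ε / K)) as [bs Hbs].
  { apply Rdiv_lt_0_compat; lra. }
  set (g := fun a => fold_right (fun b acc => Rmin (h b + ε + K * dist fs a b) acc) (M + ε) bs).
  exists g. split.
  - unfold g. clear Hbs. induction bs as [|b bs IH]; simpl.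
    + apply Hc.
    + apply (Hmin (fun a => h b + ε + K * dist fs a b)); [|exact IH].
      apply (Hadd (h b + ε) (fun a => K * dist fs a b)).
      apply (Hmul K (fun a => dist fs a b)). auto.
  - intros s.
    assert (Hlo : h s <= g s).
    { unfold g. apply (fold_min_ge (fun b => h b + ε + K * dist fs s b)).
      - intros b _. pose proof (Hlip s b). revert H.
        generalize (h s) (h b) (K * dist fs s b). intros. rsolve.
      - pose proof (HM s). revert H. generalize (h s). intros. rsolve. }
    destruct (Hbs s) as [b [Hb Hsb]].
    assert (Hup : g s <= h b + ε + K * dist fs s b).
    { unfold g. apply (fold_min_le (fun b => h b + ε + K * dist fs s b)); auto. }
    assert (HKd : K * dist fs s b < ε).
    { replace ε with (K * (ε / K)) by (field; lra).
      apply Rmult_lt_compat_l; auto. }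
    pose proof (Hlip s b).
    assert (g s < h s + 4 * ε).
    { revert H Hup HKd. generalize (h s) (h b) (K * dist fs s b). intros. rsolve. }
    unfold ε in H0. revert Hlo H0. generalize (g s) (h s). intros. rsolve.
Qed.

Lemma sem_uc (B : Type -> Type) (fmap : forall X Y : Type, (X -> Y) -> B X -> B Y)
  (Lam : Type) (tau : Lam -> B R -> R) (X : Type) (x : X -> B X) U :
  is_uniformity U ->
  (forall l phi, unif_cont U (sem B fmap Lam tau X x phi) ->
     unif_cont U (sem B fmap Lam tau X x (FHeart l phi))) ->
  forall phi, unif_cont U (sem B fmap Lam tau X x phi).
Proof.
  intros HU HH phi. induction phi.
  - simpl. apply uc_const; auto.
  - simpl. apply uc_min; auto.
  - simpl. apply uc_add; auto.
  - simpl. apply uc_mul; auto.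
  - apply HH; auto.
Qed.

Lemma sem_bounded (B : Type -> Type) (fmap : forall X Y : Type, (X -> Y) -> B X -> B Y)
  (Lam : Type) (tau : Lam -> B R -> R)
  (hbounded : forall (Y : Type) (l : Lam) (k : Y -> R),
      bounded_fun k -> bounded_fun (fun b : B Y => tau l (fmap Y R k b)))
  (X : Type) (x : X -> B X) phi : bounded_fun (sem B fmap Lam tau X x phi).
Proof.
  induction phi; simpl.
  - exists 1. intros. rewrite Rabs_R1. lra.
  - destruct IHphi1 as [M1 H1], IHphi2 as [M2 H2]. exists (Rabs M1 + Rabs M2).
    intros y. specialize (H1 y). specialize (H2 y). revert H1 H2.
    generalize (sem B fmap Lam tau X x phi1 y) (sem B fmap Lam tau X x phi2 y).
    intros. unfold Rabs, Rmin in *. 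
    repeat match goal with
    | |- context [Rcase_abs ?x] => destruct (Rcase_abs x)
    | H : context [Rcase_abs ?x] |- _ => destruct (Rcase_abs x)
    | |- context [Rle_dec ?x ?y] => destruct (Rle_dec x y)
    end; lra.
  - destruct IHphi as [M H]. exists (Rabs r + M). intros y.
    eapply Rle_trans; [apply Rabs_triang|]. specialize (H y). lra.
  - destruct IHphi as [M H]. exists (Rabs r * M). intros y.
    rewrite Rabs_mult. apply Rmult_le_compat_l; auto. apply Rabs_pos.
  - destruct (hbounded X l _ IHphi) as [M H]. exists M. intros y. apply H.
Qed.

Theorem mainTheorem13
  (B : Type -> Type) (fmap : forall X Y : Type, (X -> Y) -> B X -> B Y)
  (fmap_id : forall (X : Type) (b : B X), fmap X X (fun a => a) b = b)
  (fmap_comp : forall (X Y Z : Type) (f : X -> Y) (g : Y -> Z) (b : B X),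
      fmap X Z (fun a => g (f a)) b = fmap Y Z g (fmap X Y f b))
  (Lam : Type) (tau : Lam -> B R -> R)
  (hbounded : forall (Y : Type) (l : Lam) (k : Y -> R),
      bounded_fun k -> bounded_fun (fun b : B Y => tau l (fmap Y R k b)))
  (hconv : forall (Y : Type) (l : Lam) (k : nat -> Y -> R) (h : Y -> R),
      unif_conv k h ->
      unif_conv (fun i (b : B Y) => tau l (fmap Y R (k i) b))
                (fun b : B Y => tau l (fmap Y R h b))) :
  forall (X : Type) (x : X -> B X) (U : (X * X -> Prop) -> Prop),
    is_bisim_unif B fmap Lam tau X x U <->
    unif_eq U (logical_unif B fmap Lam tau X x).
Proof.
  intros X x.
  set (sm := sem B fmap Lam tau X x).
  set (Fs := fun f : X -> R => exists phi, f = sm phi).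
  assert (HL : logical_unif B fmap Lam tau X x = Wgen Fs) by apply gen_eq.
  set (G := fun V (f : X -> R) => exists l h, unif_cont V h /\
              f = (fun s => tau l (fmap X R h (x s)))).
  assert (HPhi : forall V, Phi B fmap Lam tau X x V = Wgen (G V)) by (intros; apply gen_eq).
  assert (Lunif : is_uniformity (Wgen Fs)) by apply W_unif.
  assert (HP : forall l h, unif_cont (Wgen Fs) h ->
             unif_cont (Wgen Fs) (fun s => tau l (fmap X R h (x s)))).
  { intros l h Hh.
    assert (Happ : forall e, 0 < e -> exists phi, forall s, Rabs (sm phi s - h s) < e).
    { intros e He.
      destruct (approx Fs (fun g => exists phi, forall s, sm phi s = g s)) with (h := h) (e := e)
        as [g [[phi Hphi] Hg]]; auto.
      - intros f [phi ->]. apply sem_bounded; auto.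
      - intros f [phi ->]. exists phi; auto.
      - intros c. exists (FAdd (c - 1) FOne). intros s. simpl. ring.
      - intros f g [p Hp] [q Hq]. exists (FMin p q). intros s. simpl. rewrite Hp, Hq. auto.
      - intros r f [p Hp]. exists (FAdd r p). intros s. simpl. rewrite Hp. auto.
      - intros r f [p Hp]. exists (FMul r p). intros s. simpl. rewrite Hp. auto.
      - intros f g [p Hp] Hfg. exists p. intros s. rewrite Hp. auto.
      - exists phi. intros s. rewrite Hphi. auto. }
    assert (Hpos : forall n : nat, 0 < / (INR n + 1)).
    { intros n. apply Rinv_0_lt_compat. pose proof (pos_INR n). lra. }
    set (ph := fun n => proj1_sig (constructive_indefinite_description _ (Happ _ (Hpos n)))).
    assert (Hph : forall n s, Rabs (sm (ph n) s - h s) < / (INR n + 1)).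
    { intros n. unfold ph. destruct (constructive_indefinite_description _ _) as [p Hp]. exact Hp. }
    assert (Hcv : unif_conv (fun n => sm (ph n)) h).
    { intros e He. destruct (INR_unbounded (/ e)) as [N HN]. exists N. intros n Hn y.
      eapply Rlt_trans; [apply Hph|].
      assert (INR N <= INR n) by (apply le_INR; auto).
      rewrite <- (Rinv_inv e). apply Rinv_lt_contravar.
      + apply Rmult_lt_0_compat; [apply Rinv_0_lt_compat; auto| pose proof (pos_INR n); lra].
      + lra. }
    pose proof (hconv X l _ _ Hcv) as Hc2.
    apply (uc_limit _ (fun n s => tau l (fmap X R (sm (ph n)) (x s)))); auto.
    - intros n. apply W_cont. exists (FHeart l (ph n)). reflexivity.
    - intros e He. destruct (Hc2 e He) as [N HN]. exists N. intros n Hn s. apply HN; auto. }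
  assert (Lfix : unif_eq (Phi B fmap Lam tau X x (Wgen Fs)) (Wgen Fs)).
  { intros E. rewrite HPhi. split.
    - apply W_le; auto. intros f [l [h [Hh ->]]]. apply HP; auto.
    - apply W_le; [apply W_unif|]. intros f [phi ->]. apply sem_uc; [apply W_unif|].
      intros l p _. apply W_cont. exists l, (sm p). split; [|reflexivity].
      apply W_cont. exists p. reflexivity. }
  assert (Lgreat : forall V, is_uniformity V -> unif_eq (Phi B fmap Lam tau X x V) V ->
             unif_sqle V (Wgen Fs)).
  { intros V HV Hfix E HE. apply (W_le Fs V HV); auto. intros f [phi ->].
    apply sem_uc; auto. intros l p Hp.
    assert (H1 : unif_cont (Phi B fmap Lam tau X x V) (sm (FHeart l p))).
    { rewrite HPhi. apply W_cont. exists l, (sm p). split; auto. }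
    intros E' HE'. apply (proj1 (Hfix _)). exact (H1 E' HE'). }
  rewrite HL. intros U. split.
  - intros [HU [Hfix Hgr]] E. split.
    + intro HE. apply (Hgr _ Lunif Lfix E HE).
    + apply (Lgreat U HU Hfix).
  - intros Heq. assert (U = Wgen Fs).
    { extensionality E. apply propositional_extensionality. apply Heq. }
    subst U. split; [auto| split; [auto|]].
    intros V HV Hfix. apply Lgreat; auto.
Qed.
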